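(* There is an absolute constant $C$ such that for every $\alpha>0$ and every classical ($C^2$) solution $u$ of the equivariant Skyrme equation on an open subset of $\{(t,r):r>0\}$, \[ |\partial_\xi(r(e+m))|\le C\big((e+m)(e-m)\big)^{1/2},\qquad |\partial_\eta(r(e-m))|\le C\big((e+m)(e-m)\big)^{1/2}, \] where $\eta=t+r$, $\xi=t-r$ are null coordinates, i.e. $\partial_\xi=\frac12(\partial_t-\partial_r)$, $\partial_\eta=\frac12(\partial_t+\partial_r)$.
   Context: The equivariant Skyrme equation is \[ w(u_{tt}-u_{rr}) - \Big(1-\tfrac{\alpha^2\sin^2u}{r^2}\Big)\tfrac{u_r}{r} + \tfrac{\sin 2u}{2r^2}\big[\alpha^2(u_t^2-u_r^2)+1\big]=0,\qquad w:=1+\tfrac{\alpha^2\sin^2u}{r^2}. \] Energy density $e:=w\frac{u_t^2+u_r^2}{2}+\frac{\sin^2u}{2r^2}$, momentum density $m:=w u_tu_r$ (note $e\pm m\ge0$). *)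

(* Defs.v *)
From Stdlib Require Import Reals Lra.
Open Scope R_scope.

Definition open2 (U : R -> R -> Prop) : Prop :=
  forall t r, U t r -> exists d, 0 < d /\
    forall t' r', Rabs (t' - t) < d -> Rabs (r' - r) < d -> U t' r'.

Definition in_half_plane (U : R -> R -> Prop) : Prop :=
  forall t r, U t r -> 0 < r.

Definition cont2_on (U : R -> R -> Prop) (f : R -> R -> R) : Prop :=
  forall t r, U t r -> forall eps, 0 < eps -> exists d, 0 < d /\
    forall t' r', U t' r' -> Rabs (t' - t) < d -> Rabs (r' - r) < d ->
      Rabs (f t' r' - f t r) < eps.

Definition C2_on (U : R -> R -> Prop) (u ut ur utt utr urt urr : R -> R -> R)
  : Prop :=
  (forall t r, U t r ->
     derivable_pt_lim (fun s => u s r) t (ut t r) /\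
     derivable_pt_lim (fun s => u t s) r (ur t r) /\
     derivable_pt_lim (fun s => ut s r) t (utt t r) /\
     derivable_pt_lim (fun s => ut t s) r (utr t r) /\
     derivable_pt_lim (fun s => ur s r) t (urt t r) /\
     derivable_pt_lim (fun s => ur t s) r (urr t r)) /\
  cont2_on U u /\ cont2_on U ut /\ cont2_on U ur /\
  cont2_on U utt /\ cont2_on U utr /\ cont2_on U urt /\ cont2_on U urr.

Definition wfun (alpha uv r : R) : R := 1 + alpha^2 * (sin uv)^2 / r^2.

Definition skyrme_eq (alpha : R) (U : R -> R -> Prop)
  (u ut ur utt urr : R -> R -> R) : Prop :=
  forall t r, U t r ->
    wfun alpha (u t r) r * (utt t r - urr t r)
    - (1 - alpha^2 * (sin (u t r))^2 / r^2) * (ur t r / r)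
    + sin (2 * u t r) / (2 * r^2)
        * (alpha^2 * ((ut t r)^2 - (ur t r)^2) + 1) = 0.

Definition edens (alpha : R) (u ut ur : R -> R -> R) (t r : R) : R :=
  wfun alpha (u t r) r * ((ut t r)^2 + (ur t r)^2) / 2
  + (sin (u t r))^2 / (2 * r^2).

Definition mdens (alpha : R) (u ut ur : R -> R -> R) (t r : R) : R :=
  wfun alpha (u t r) r * ut t r * ur t r.

(* Main.v *)
Require Import Defs.
From Coquelicot Require Import Coquelicot.
From Stdlib Require Import Reals Lra Psatz.
Open Scope R_scope.

Lemma path_deriv U f ft fr t r a b : open2 U -> U t r ->
  (forall x y, U x y -> derivable_pt_lim (fun s => f s y) x (ft x y)) ->
  cont2_on U ft -> derivable_pt_lim (fun s => f t s) r fr ->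
  derivable_pt_lim (fun s => f (t + a*s) (r + b*s)) 0 (a * ft t r + b * fr).
Proof.
intros HU Htr Hd Hc Hr.
destruct (HU t r Htr) as [d0 [Hd0 Hin]].
assert (HA : derivable_pt_lim (fun s => f (t + a*s) (r + b*s) - f t (r + b*s)) 0 (a * ft t r)).
{ intros eps Heps.
  assert (Ha1 : 0 < Rabs a + 1) by (generalize (Rabs_pos a); lra).
  destruct (Hc t r Htr (eps / (Rabs a + 1))) as [d1 [Hd1 Hc1]].
  { apply Rdiv_lt_0_compat; lra. }
  assert (Hm : 0 < Rmin d0 d1 / (Rabs a + Rabs b + 1)).
  { apply Rdiv_lt_0_compat. apply Rmin_pos; lra.
    generalize (Rabs_pos a) (Rabs_pos b); lra. }
  exists (mkposreal _ Hm). intros h Hh0 Hh. simpl in Hh.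
  assert (Hab : Rabs a * Rabs h < Rmin d0 d1 /\ Rabs b * Rabs h < Rmin d0 d1).
  { assert (Hpos : 0 < Rabs a + Rabs b + 1) by (generalize (Rabs_pos a) (Rabs_pos b); lra).
    apply Rlt_div_r in Hh; [|lra].
    assert (0 <= Rabs h) by apply Rabs_pos.
    generalize (Rabs_pos a) (Rabs_pos b); split; nra. }
  destruct Hab as [Ha Hb].
  assert (Hm0 := Rmin_l d0 d1). assert (Hm1 := Rmin_r d0 d1).
  assert (Hbh : Rabs (r + b * h - r) < d0).
  { replace (r + b*h - r) with (b*h) by ring. rewrite Rabs_mult. lra. }
  destruct (MVT_cor4 (fun x => f x (r + b*h)) (fun x => ft x (r + b*h)) t (Rabs (a*h))) with (b := t + a*h)
    as [c [Hc2 Hc3]].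
  { intros c Hcc. apply is_derive_Reals. apply Hd. apply Hin; auto.
    rewrite Rabs_mult in Hcc. lra. }
  { replace (t + a*h - t) with (a*h) by ring. lra. }
  replace (t + a*h - t) with (a*h) in Hc3, Hc2 by ring.
  rewrite Rabs_mult in Hc3.
  replace (0 + h) with h by ring.
  replace (t + a*0) with t by ring. replace (r + b*0) with r by ring.
  rewrite Rminus_diag, Rminus_0_r, Hc2.
  replace (ft c (r + b*h) * (a*h) / h - a * ft t r) with (a * (ft c (r + b*h) - ft t r)) by (field; auto).
  rewrite Rabs_mult.
  assert (Hcl : Rabs (ft c (r + b * h) - ft t r) < eps / (Rabs a + 1)).
  { apply Hc1. apply Hin; [lra|]. exact Hbh. lra.
    replace (r + b*h - r) with (b*h) by ring. rewrite Rabs_mult. lra. }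
  apply Rle_lt_trans with (Rabs a * (eps / (Rabs a + 1))).
  apply Rmult_le_compat_l; [apply Rabs_pos| lra].
  apply Rlt_le_trans with ((Rabs a + 1) * (eps / (Rabs a + 1))).
  apply Rmult_lt_compat_r. apply Rdiv_lt_0_compat; lra. lra.
  right; field; lra. }
assert (HB : derivable_pt_lim (fun s => f t (r + b*s)) 0 (b * fr)).
{ assert (H1 : derivable_pt_lim (fun s => r + b*s) 0 b).
  { apply is_derive_Reals. auto_derive; auto. ring. }
  assert (H2 : derivable_pt_lim (fun s => f t s) (r + b*0) fr).
  { replace (r + b*0) with r by ring. exact Hr. }
  replace (b * fr) with (fr * b) by ring.
  exact (derivable_pt_lim_comp (fun s => r + b*s) (fun s => f t s) 0 b fr H1 H2). }
apply is_derive_Reals.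
apply is_derive_ext with (fun s => (f (t + a*s) (r + b*s) - f t (r + b*s)) + f t (r + b*s)).
intros s; unfold Rminus; rewrite Rplus_assoc, Rplus_opp_l, Rplus_0_r; reflexivity.
apply is_derive_Reals. apply derivable_pt_lim_plus; auto.
Qed.
Lemma loc_of (x : R) (d : posreal) (P : R -> Prop) :
  (forall z, Rabs (z - x) < d -> P z) -> locally x P.
Proof. intros H. exists d. intros z Hz. apply H. exact Hz. Qed.

Lemma mixed U u ut ur utr urt t r : open2 U -> U t r ->
  (forall x y, U x y -> derivable_pt_lim (fun s => u s y) x (ut x y) /\
     derivable_pt_lim (fun s => u x s) y (ur x y) /\
     derivable_pt_lim (fun s => ut x s) y (utr x y) /\
     derivable_pt_lim (fun s => ur s y) x (urt x y)) ->
  cont2_on U utr -> cont2_on U urt -> utr t r = urt t r.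
Proof.
intros HU Htr Hd Hc1 Hc2.
destruct (HU t r Htr) as [d0 [Hd0 Hin]].
assert (Hh : 0 < d0/2) by lra. set (h := mkposreal _ Hh).
assert (F1 : forall x y, Rabs (x - t) < d0 -> Rabs (y - r) < d0 ->
   Derive (fun s => u x s) y = ur x y /\ Derive (fun s => u s y) x = ut x y).
{ intros x y Hx Hy. destruct (Hd x y (Hin x y Hx Hy)) as [A [B _]].
  split; apply is_derive_unique; apply is_derive_Reals; auto. }
assert (F2 : forall x y, Rabs (x - t) < h -> Rabs (y - r) < h ->
   is_derive (fun z => Derive (fun s => u z s) y) x (urt x y) /\
   is_derive (fun z => Derive (fun s => u s z) x) y (utr x y)).
{ intros x y Hx Hy. simpl in Hx, Hy.
  destruct (Hd x y (Hin x y ltac:(lra) ltac:(lra))) as [_ [_ [C D]]].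
  split.
  - apply is_derive_ext_loc with (fun z => ur z y).
    + apply loc_of with h. intros z Hz. simpl in Hz.
      symmetry. apply (F1 z y).
      replace (z - t) with ((z - x) + (x - t)) by ring.
      apply Rle_lt_trans with (Rabs (z-x) + Rabs (x-t)); [apply Rabs_triang| lra]. lra.
    + apply is_derive_Reals; auto.
  - apply is_derive_ext_loc with (fun z => ut x z).
    + apply loc_of with h. intros z Hz. simpl in Hz.
      symmetry. apply (F1 x z). lra.
      replace (z - r) with ((z - y) + (y - r)) by ring.
      apply Rle_lt_trans with (Rabs (z-y) + Rabs (y-r)); [apply Rabs_triang| lra].
    + apply is_derive_Reals; auto. }
assert (Hcont : forall g, cont2_on U g -> continuity_2d_pt g t r).
{ intros g Hg eps. destruct (Hg t r Htr eps (cond_pos eps)) as [d1 [Hd1 Hg1]].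
  assert (Hm : 0 < Rmin d0 d1) by (apply Rmin_pos; lra).
  exists (mkposreal _ Hm). simpl. intros x y Hx Hy.
  assert (Hm0 := Rmin_l d0 d1). assert (Hm1 := Rmin_r d0 d1).
  apply Hg1; try lra. apply Hin; lra. }
assert (H0t : Rabs (t - t) < h) by (rewrite Rminus_diag, Rabs_R0; apply cond_pos).
assert (H0r : Rabs (r - r) < h) by (rewrite Rminus_diag, Rabs_R0; apply cond_pos).
destruct (F2 t r H0t H0r) as [E1 E2].
apply is_derive_unique in E1. apply is_derive_unique in E2.
rewrite <- E1, <- E2. symmetry. apply Schwarz.
- exists h. intros x y Hx Hy. destruct (F2 x y Hx Hy) as [A B].
  simpl in Hx, Hy.
  destruct (Hd x y (Hin x y ltac:(lra) ltac:(lra))) as [C [D _]].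
  repeat split.
  + exists (ut x y). apply is_derive_Reals; auto.
  + exists (ur x y). apply is_derive_Reals; auto.
  + exists (urt x y); auto.
  + exists (utr x y); auto.
- apply continuity_2d_pt_ext_loc with urt.
  + exists h. intros x y Hx Hy. symmetry. apply is_derive_unique. apply (F2 x y Hx Hy).
  + apply Hcont; auto.
- apply continuity_2d_pt_ext_loc with utr.
  + exists h. intros x y Hx Hy. symmetry. apply is_derive_unique. apply (F2 x y Hx Hy).
  + apply Hcont; auto.
Qed.
Definition L1 al r G H K dg dh dk :=
  let sn := sin G in let cs := cos G in
  let W := 1 + al^2*sn^2/r^2 in
  let dW := 2*al^2*sn*cs*dg/r^2 + al^2*sn^2/r^3 in
  let E0 := W*(H^2+K^2)/2 + sn^2/(2*r^2) + W*H*K in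
  -(1/2)*E0 + r*( dW*((H^2+K^2)/2 + H*K) + W*(H*dh + K*dk + dh*K + H*dk)
     + sn*cs*dg/r^2 + sn^2/(2*r^3)).

Definition L2 al r G H K dg dh dk :=
  let sn := sin G in let cs := cos G in
  let W := 1 + al^2*sn^2/r^2 in
  let dW := 2*al^2*sn*cs*dg/r^2 - al^2*sn^2/r^3 in
  let E0 := W*(H^2+K^2)/2 + sn^2/(2*r^2) - W*H*K in
  (1/2)*E0 + r*( dW*((H^2+K^2)/2 - H*K) + W*(H*dh + K*dk - dh*K - H*dk)
     + sn*cs*dg/r^2 - sn^2/(2*r^3)).

Lemma deriv1 al r (g h k : R -> R) dg dh dk : r <> 0 ->
  derivable_pt_lim g 0 dg -> derivable_pt_lim h 0 dh -> derivable_pt_lim k 0 dk ->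
  derivable_pt_lim (fun s => (r - s/2) * ((wfun al (g s) (r - s/2) * ((h s)^2 + (k s)^2)/2
     + (sin (g s))^2/(2*(r - s/2)^2)) + wfun al (g s) (r - s/2) * h s * k s)) 0
   (L1 al r (g 0) (h 0) (k 0) dg dh dk).
Proof.
intros Hr Hg Hh Hk. apply is_derive_Reals in Hg, Hh, Hk.
apply is_derive_Reals. unfold wfun.
auto_derive.
- replace (r + - (0 * / 2)) with r by field.
  repeat split; try (eexists; eassumption); intro Hc; apply Hr; nra.
- replace (Derive (fun x => g x) 0) with dg by (symmetry; apply is_derive_unique; exact Hg).
  replace (Derive (fun x => h x) 0) with dh by (symmetry; apply is_derive_unique; exact Hh).
  replace (Derive (fun x => k x) 0) with dk by (symmetry; apply is_derive_unique; exact Hk).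
  replace (r + - (0 * / 2)) with r by field.
  unfold L1. field. auto.
Qed.

Lemma deriv2 al r (g h k : R -> R) dg dh dk : r <> 0 ->
  derivable_pt_lim g 0 dg -> derivable_pt_lim h 0 dh -> derivable_pt_lim k 0 dk ->
  derivable_pt_lim (fun s => (r + s/2) * ((wfun al (g s) (r + s/2) * ((h s)^2 + (k s)^2)/2
     + (sin (g s))^2/(2*(r + s/2)^2)) - wfun al (g s) (r + s/2) * h s * k s)) 0
   (L2 al r (g 0) (h 0) (k 0) dg dh dk).
Proof.
intros Hr Hg Hh Hk. apply is_derive_Reals in Hg, Hh, Hk.
apply is_derive_Reals. unfold wfun.
auto_derive.
- replace (r + 0 / 2) with r by field.
  repeat split; try (eexists; eassumption); intro Hc; apply Hr; nra.
- replace (Derive (fun x => g x) 0) with dg by (symmetry; apply is_derive_unique; exact Hg).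
  replace (Derive (fun x => h x) 0) with dh by (symmetry; apply is_derive_unique; exact Hh).
  replace (Derive (fun x => k x) 0) with dk by (symmetry; apply is_derive_unique; exact Hk).
  replace (r + 0 / 2) with r by field.
  unfold L2. field. auto.
Qed.

Lemma eq_via (A B c E : R) : E = 0 -> A - B = c*E -> A = B.
Proof. intros H1 H2. rewrite H1, Rmult_0_r in H2. lra. Qed.

Lemma alg1 al r x y p q kk G : r <> 0 ->
  (1 + al^2*(sin G)^2/r^2) * (p - q) - (1 - al^2*(sin G)^2/r^2) * (y/r)
    + sin (2*G)/(2*r^2) * (al^2*(x^2 - y^2) + 1) = 0 ->
  L1 al r G x y ((x-y)/2) ((p-kk)/2) ((kk-q)/2) =
  -(1 - al^2*(sin G)^2/r^2)*(x^2-y^2)/4 - sin G * cos G * y / r + (sin G)^2/(4*r^2).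
Proof.
intros Hr E. rewrite sin_2a in E.
apply (eq_via _ _ (r*(x+y)/2) _ E). unfold L1. field. auto.
Qed.

Lemma alg2 al r x y p q kk G : r <> 0 ->
  (1 + al^2*(sin G)^2/r^2) * (p - q) - (1 - al^2*(sin G)^2/r^2) * (y/r)
    + sin (2*G)/(2*r^2) * (al^2*(x^2 - y^2) + 1) = 0 ->
  L2 al r G x y ((x+y)/2) ((p+kk)/2) ((kk+q)/2) =
  -(-(1 - al^2*(sin G)^2/r^2)*(x^2-y^2)/4 - sin G * cos G * y / r + (sin G)^2/(4*r^2)).
Proof.
intros Hr E. rewrite sin_2a in E.
apply (eq_via _ _ (r*(x-y)/2) _ E). unfold L2. field. auto.
Qed.
Ltac pos := repeat (apply Rmult_le_pos || (apply Rlt_le; apply Rinv_0_lt_compat)); try lra; try nra.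

Lemma babs x a : Rabs x <= a -> -a <= x <= a.
Proof. intros H. split. generalize (Rle_abs (-x)); rewrite Rabs_Ropp; lra. generalize (Rle_abs x); lra. Qed.

Lemma sqle z P : 0 <= z -> z*z <= P -> z <= sqrt P.
Proof. intros H1 H2. rewrite <- (sqrt_square z H1). apply sqrt_le_1_alt. exact H2. Qed.

Lemma bound al r x y S Co : 0 < r -> Rabs Co <= 1 ->
 Rabs (-(1 - al^2*S^2/r^2)*(x^2-y^2)/4 - S*Co*y/r + S^2/(4*r^2)) <=
 3 * sqrt (((1 + al^2*S^2/r^2)*(x^2+y^2)/2 + S^2/(2*r^2) + (1 + al^2*S^2/r^2)*x*y) *
           ((1 + al^2*S^2/r^2)*(x^2+y^2)/2 + S^2/(2*r^2) - (1 + al^2*S^2/r^2)*x*y)).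
Proof.
intros Hr HCo.
set (v := al^2*S^2/r^2).
assert (Hv : 0 <= v).
{ unfold v. apply Rmult_le_pos. apply Rmult_le_pos; apply pow2_ge_0.
  apply Rlt_le, Rinv_0_lt_compat. apply pow_lt; auto. }
set (W := 1 + v).
set (a := x + y). set (b := x - y).
set (c0 := S^2/(2*r^2)).
set (A1 := W*a^2/2). set (B1 := W*b^2/2).
assert (Hc0 : 0 <= c0).
{ unfold c0. apply Rmult_le_pos. apply pow2_ge_0.
  apply Rlt_le, Rinv_0_lt_compat. nra. }
assert (HA1 : 0 <= A1) by (unfold A1, W; nra).
assert (HB1 : 0 <= B1) by (unfold B1, W; nra).
replace (W*(x^2+y^2)/2 + c0 + W*x*y) with (A1 + c0)
  by (unfold A1, a; field).
replace (W*(x^2+y^2)/2 + c0 - W*x*y) with (B1 + c0)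
  by (unfold B1, b; field).
set (Q := sqrt ((A1 + c0) * (B1 + c0))).
assert (HAB : (A1 + c0) * (B1 + c0) = A1*B1 + A1*c0 + c0*B1 + c0*c0) by field.
assert (P1 : 0 <= A1*B1) by (apply Rmult_le_pos; auto).
assert (P2 : 0 <= A1*c0) by (apply Rmult_le_pos; auto).
assert (P3 : 0 <= c0*B1) by (apply Rmult_le_pos; auto).
assert (P4 : 0 <= c0*c0) by (apply Rmult_le_pos; auto).
set (ha := Rabs a). set (hb := Rabs b). set (hs := Rabs S).
assert (Ha : ha*ha = a^2) by (unfold ha; rewrite <- Rabs_mult; rewrite Rabs_right; [ring| nra]).
assert (Hb : hb*hb = b^2) by (unfold hb; rewrite <- Rabs_mult; rewrite Rabs_right; [ring| nra]).
assert (Hs : hs*hs = S^2) by (unfold hs; rewrite <- Rabs_mult; rewrite Rabs_right; [ring| nra]).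
assert (ha0 : 0 <= ha) by apply Rabs_pos.
assert (hb0 : 0 <= hb) by apply Rabs_pos.
assert (hs0 : 0 <= hs) by apply Rabs_pos.
assert (Q1 : W*ha*hb/2 <= Q).
{ apply sqle. assert (0 <= W) by (unfold W; lra). assert (0 <= ha*hb) by nra.
  replace (W*ha*hb/2) with ((W*(ha*hb))* /2) by field. apply Rmult_le_pos; [nra|lra].
  replace (W*ha*hb/2*(W*ha*hb/2)) with (A1*B1).
  lra. unfold A1, B1. replace (W * ha * hb / 2 * (W * ha * hb / 2)) with (W*W*(ha*ha)*(hb*hb)/4) by field.
  rewrite Ha, Hb. field. }
assert (Q2 : hs*ha/(2*r) <= Q).
{ apply sqle. apply Rmult_le_pos. nra. apply Rlt_le, Rinv_0_lt_compat. lra.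
  apply Rle_trans with (A1*c0); [|lra].
  replace (hs*ha/(2*r)*(hs*ha/(2*r))) with ((hs*hs)*(ha*ha)/(4*r^2)) by (field; lra).
  rewrite Hs, Ha. unfold A1, c0, W.
  replace ((1 + v) * a ^ 2 / 2 * (S ^ 2 / (2 * r ^ 2))) with ((1+v) * (S^2 * a^2 / (4*r^2))) by (field; lra).
  assert (0 <= S^2*a^2/(4*r^2)).
  { apply Rmult_le_pos. nra. apply Rlt_le, Rinv_0_lt_compat. nra. }
  nra. }
assert (Q3 : hs*hb/(2*r) <= Q).
{ apply sqle. apply Rmult_le_pos. nra. apply Rlt_le, Rinv_0_lt_compat. lra.
  apply Rle_trans with (c0*B1); [|lra].
  replace (hs*hb/(2*r)*(hs*hb/(2*r))) with ((hs*hs)*(hb*hb)/(4*r^2)) by (field; lra).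
  rewrite Hs, Hb. unfold B1, c0, W.
  replace (S ^ 2 / (2 * r ^ 2) * ((1 + v) * b ^ 2 / 2)) with ((1+v) * (S^2 * b^2 / (4*r^2))) by (field; lra).
  assert (0 <= S^2*b^2/(4*r^2)).
  { apply Rmult_le_pos. nra. apply Rlt_le, Rinv_0_lt_compat. nra. }
  nra. }
assert (Q4 : c0 <= Q) by (apply sqle; lra).
assert (T1 : Rabs ((1 - v)*(x^2-y^2)/4) <= W*ha*hb/4).
{ replace ((1 - v)*(x^2-y^2)/4) with ((1-v)*(a*b)/4) by (unfold a, b; field).
  unfold Rdiv. rewrite !Rabs_mult. rewrite (Rabs_right (/4)) by lra.
  fold ha hb. unfold W.
  assert (Rabs (1 - v) <= 1 + v) by (apply Rabs_le; lra).
  assert (0 <= ha*hb) by nra.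
  nra. }
assert (T2 : Rabs (S*Co*y/r) <= hs*ha/(2*r) + hs*hb/(2*r)).
{ replace (hs*ha/(2*r) + hs*hb/(2*r)) with (hs*((ha + hb)/2)/r) by (field; lra).
  unfold Rdiv. rewrite !Rabs_mult. rewrite (Rabs_right (/r)) by (apply Rle_ge, Rlt_le, Rinv_0_lt_compat; lra).
  apply Rmult_le_compat_r. apply Rlt_le, Rinv_0_lt_compat; lra.
  fold hs.
  assert (Hy : Rabs y <= (ha + hb) * /2).
  { replace y with ((a - b)/2) by (unfold a, b; field).
    unfold Rdiv; rewrite Rabs_mult, (Rabs_right (/2)) by lra.
    apply Rmult_le_compat_r. lra. unfold ha, hb.
    unfold Rminus; eapply Rle_trans; [apply Rabs_triang|]. rewrite Rabs_Ropp; lra. }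
  assert (0 <= Rabs Co) by apply Rabs_pos.
  assert (0 <= Rabs y) by apply Rabs_pos.
  rewrite Rmult_assoc. apply Rmult_le_compat_l; [lra|]. nra. }
assert (T3 : S^2/(4*r^2) = c0/2) by (unfold c0; field; lra).
rewrite T3.
assert (E : -(1 - v)*(x^2-y^2)/4 - S*Co*y/r + c0/2 = -((1 - v)*(x^2-y^2)/4) - S*Co*y/r + c0/2) by (field; lra).
rewrite E.
apply babs in T1. apply babs in T2.
apply Rabs_le. fold Q. split; lra.
Qed.

Lemma path_xi U f ft fr t r : open2 U -> U t r ->
  (forall x y, U x y -> derivable_pt_lim (fun s => f s y) x (ft x y)) ->
  cont2_on U ft -> derivable_pt_lim (fun s => f t s) r fr ->
  derivable_pt_lim (fun s => f (t + s/2) (r - s/2)) 0 ((ft t r - fr)/2).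
Proof.
intros H1 H2 H3 H4 H5.
assert (H := path_deriv U f ft fr t r (1/2) (-1/2) H1 H2 H3 H4 H5).
apply is_derive_Reals in H. apply is_derive_Reals.
replace ((ft t r - fr)/2) with (1/2 * ft t r + -1/2 * fr) by field.
apply is_derive_ext with (2 := H). intros s. simpl.
f_equal; field.
Qed.

Lemma path_eta U f ft fr t r : open2 U -> U t r ->
  (forall x y, U x y -> derivable_pt_lim (fun s => f s y) x (ft x y)) ->
  cont2_on U ft -> derivable_pt_lim (fun s => f t s) r fr ->
  derivable_pt_lim (fun s => f (t + s/2) (r + s/2)) 0 ((ft t r + fr)/2).
Proof.
intros H1 H2 H3 H4 H5.
assert (H := path_deriv U f ft fr t r (1/2) (1/2) H1 H2 H3 H4 H5).
apply is_derive_Reals in H. apply is_derive_Reals.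
replace ((ft t r + fr)/2) with (1/2 * ft t r + 1/2 * fr) by field.
apply is_derive_ext with (2 := H). intros s. simpl.
f_equal; field.
Qed.

Theorem mainTheorem9 :
  exists C : R,
  forall (alpha : R) (U : R -> R -> Prop) (u ut ur utt utr urt urr : R -> R -> R),
    0 < alpha ->
    open2 U -> in_half_plane U ->
    C2_on U u ut ur utt utr urt urr ->
    skyrme_eq alpha U u ut ur utt urr ->
    forall t r, U t r ->
      let e := edens alpha u ut ur in
      let m := mdens alpha u ut ur in
      let Q := sqrt ((e t r + m t r) * (e t r - m t r)) in
      (exists l, derivable_pt_lim
                   (fun s => (r - s/2) * (e (t + s/2) (r - s/2) + m (t + s/2) (r - s/2))) 0 l
                 /\ Rabs l <= C * Q) /\
      (exists l, derivable_pt_lim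
                   (fun s => (r + s/2) * (e (t + s/2) (r + s/2) - m (t + s/2) (r + s/2))) 0 l
                 /\ Rabs l <= C * Q).
Proof.
exists 3.
intros alpha U u ut ur utt utr urt urr Ha HU Hhp HC2 Heq t r Htr e m Q.
destruct HC2 as [Hd [Hcu [Hcut [Hcur [Hcutt [Hcutr [Hcurt Hcurr]]]]]]].
assert (Hr : 0 < r) by (apply (Hhp t r Htr)).
assert (Hr0 : r <> 0) by lra.
assert (Hmix : utr t r = urt t r).
{ apply (mixed U u ut ur utr urt t r HU Htr); auto.
  intros x y Hxy. destruct (Hd x y Hxy) as [A [B [C [D [E F]]]]]. auto. }
assert (Hdu : forall x y, U x y -> derivable_pt_lim (fun s => u s y) x (ut x y))
  by (intros x y Hxy; apply (Hd x y Hxy)).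
assert (Hdut : forall x y, U x y -> derivable_pt_lim (fun s => ut s y) x (utt x y))
  by (intros x y Hxy; apply (Hd x y Hxy)).
assert (Hdur : forall x y, U x y -> derivable_pt_lim (fun s => ur s y) x (urt x y))
  by (intros x y Hxy; apply (Hd x y Hxy)).
destruct (Hd t r Htr) as [_ [Hur [_ [Hutr [_ Hurr]]]]].
assert (HE := Heq t r Htr). unfold wfun in HE.
assert (HCo : Rabs (cos (u t r)) <= 1) by (apply Rabs_le; apply COS_bound).
split.
- exists (L1 alpha r (u t r) (ut t r) (ur t r) ((ut t r - ur t r)/2)
           ((utt t r - utr t r)/2) ((urt t r - urr t r)/2)).
  split.
  + assert (H := deriv1 alpha r (fun s => u (t + s/2) (r - s/2)) (fun s => ut (t + s/2) (r - s/2))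
                  (fun s => ur (t + s/2) (r - s/2)) _ _ _ Hr0
                  (path_xi U u ut (ur t r) t r HU Htr Hdu Hcut Hur)
                  (path_xi U ut utt (utr t r) t r HU Htr Hdut Hcutt Hutr)
                  (path_xi U ur urt (urr t r) t r HU Htr Hdur Hcurt Hurr)).
    simpl in H. replace (t + 0/2) with t in H by field. replace (r - 0/2) with r in H by field.
    exact H.
  + rewrite <- Hmix. rewrite (alg1 alpha r (ut t r) (ur t r) (utt t r) (urr t r) (utr t r) (u t r) Hr0 HE).
    exact (bound alpha r (ut t r) (ur t r) (sin (u t r)) (cos (u t r)) Hr HCo).
- exists (L2 alpha r (u t r) (ut t r) (ur t r) ((ut t r + ur t r)/2)
           ((utt t r + utr t r)/2) ((urt t r + urr t r)/2)).
  split.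
  + assert (H := deriv2 alpha r (fun s => u (t + s/2) (r + s/2)) (fun s => ut (t + s/2) (r + s/2))
                  (fun s => ur (t + s/2) (r + s/2)) _ _ _ Hr0
                  (path_eta U u ut (ur t r) t r HU Htr Hdu Hcut Hur)
                  (path_eta U ut utt (utr t r) t r HU Htr Hdut Hcutt Hutr)
                  (path_eta U ur urt (urr t r) t r HU Htr Hdur Hcurt Hurr)).
    simpl in H. replace (t + 0/2) with t in H by field. replace (r + 0/2) with r in H by field.
    exact H.
  + rewrite <- Hmix. rewrite (alg2 alpha r (ut t r) (ur t r) (utt t r) (urr t r) (utr t r) (u t r) Hr0 HE).
    rewrite Rabs_Ropp.
    exact (bound alpha r (ut t r) (ur t r) (sin (u t r)) (cos (u t r)) Hr HCo).
Qed.
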